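(* Let $\mathfrak{s}$ be a simple Lie superalgebra. If $\mathfrak{s}=\bigoplus\mathfrak{s}^p$ is a grading of depth one and $\mathrm{der}(\mathfrak{s})=\bigoplus \mathrm{der}^p(\mathfrak{s})$ the associated grading of $\mathrm{der}(\mathfrak{s})$, then: (i) if $x\in\mathrm{der}^p(\mathfrak{s})$, $p\geq 0$, satisfies $[x,\mathfrak{s}^{-1}]=(0)$ then $x=0$; (ii) $\mathfrak{s}^0$ and $\mathfrak{s}^1$ are nonzero; (iii) the adjoint action of $\mathfrak{s}^{0}$ on $\mathfrak{s}^{-1}$ is irreducible of $G$-type; (iv) the depth $d(\mathrm{der}(\mathfrak{s}))\geq d(\mathfrak{s})$ and if the grading operator $D\in\mathfrak{h}$ then $d(\mathrm{der}(\mathfrak{s}))=d(\mathfrak{s})$; (v) if $x\in\mathfrak{s}^{-1}$ satisfies $[\mathfrak{s}^{0},x]=(0)$ then $x=0$.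
   Context: $\mathfrak{s}$ is a finite-dimensional complex simple Lie superalgebra with $\mathrm{der}(\mathfrak{s})=\mathfrak{s}\rtimes\mathrm{out}(\mathfrak{s})$ (semidirect sum with the inner derivations $\mathfrak{s}$ as ideal and a subalgebra $\mathrm{out}(\mathfrak{s})$ of outer derivations). A maximal torus of $\mathfrak{s}$ is conjugate to $\mathfrak{t}_{\mathfrak{s}}=\mathfrak{h}\oplus\mathfrak{t}_o$ with $\mathfrak{h}$ maximal toric in $\mathfrak{s}_{\bar 0}$ and $\mathfrak{t}_o$ maximal toric in $\mathrm{out}_{\bar 0}(\mathfrak{s})$; gradings correspond to grading operators $D\in\mathfrak{t}_{\mathfrak{s}}$. A grading has depth $d$ if $\mathfrak{s}^{-d}\neq0$ and $\mathfrak{s}^{p}=0$ for $p<-d$. A representation is irreducible of $G$-type if it has no nontrivial submodule, $\mathbb{Z}_2$-graded or not. *)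

(* Defs.v *)
From HB Require Import structures.
From mathcomp Require Import all_boot all_order all_algebra.
From mathcomp Require Import complex reals.
Set Implicit Arguments. Unset Strict Implicit. Unset Printing Implicit Defensive.
Import Order.TTheory GRing.Theory Num.Theory.
Local Open Scope ring_scope.


Section LieSuper.
Variables (K : fieldType) (V : vectType K).
Variables (V0 V1 : {vspace V}) (br : V -> V -> V).

Definition par (i : bool) : {vspace V} := if i then V1 else V0.

Definition ssign (i j : bool) : K := (-1) ^+ (i && j).

Definition is_lie_superalgebra : Prop :=
  [/\ directv (V0 + V1)%VS, (V0 + V1)%VS = fullv,
      (forall a x y z, br (a *: x + y) z = a *: br x z + br y z) &
  [/\ 
      (forall a x y z, br x (a *: y + z) = a *: br x y + br x z),
      (forall i j x y, x \in par i -> y \in par j -> br x y \in par (i (+) j)),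
      (forall i j x y, x \in par i -> y \in par j -> br x y = - (ssign i j *: br y x)) &
      (forall i j x y z, x \in par i -> y \in par j ->
         br x (br y z) = br (br x y) z + ssign i j *: br y (br x z))]].

Definition homogeneous (I : {vspace V}) : Prop :=
  I = ((I :&: V0) + (I :&: V1))%VS.

Definition is_simple : Prop :=
  (exists x y, br x y != 0) /\
  forall I : {vspace V}, homogeneous I ->
    (forall x y, y \in I -> br x y \in I) -> I = 0%VS \/ I = fullv.

Definition is_sder (e : bool) (f : 'End(V)) : Prop :=
  (forall i v, v \in par i -> f v \in par (i (+) e)) /\
  (forall i x y, x \in par i ->
     f (br x y) = br (f x) y + ssign e i *: br x (f y)).

Definition P (i : bool) : 'End(V) := if i then daddv_pi V1 V0 else daddv_pi V0 V1.
Definition ecomp (e : bool) (f : 'End(V)) : 'End(V) :=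
  \sum_(i : bool) (P (i (+) e) \o f \o P i)%VF.

(* der(s): endomorphisms whose even part is an even superderivation and whose
   odd part is an odd superderivation (= span of homogeneous superderivations) *)
Definition is_der (f : 'End(V)) : Prop :=
  f = ecomp false f + ecomp true f /\ is_sder false (ecomp false f) /\ is_sder true (ecomp true f).

Definition sbr (f g : 'End(V)) : 'End(V) :=
  \sum_(i : bool) \sum_(j : bool)
    ((ecomp i f \o ecomp j g)%VF - ssign i j *: (ecomp j g \o ecomp i f)%VF).

Definition ad (y : V) : 'End(V) := linfun (br y).

Definition eigsp (f : 'End(V)) (a : K) : {vspace V} := lker (f - a *: \1%VF).

Definition is_grading_operator (D : 'End(V)) : Prop :=
  is_sder false D /\
  exists r : seq int, (fullv <= \sum_(p <- r) eigsp D (p%:~R))%VS.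

Definition gcomp (D : 'End(V)) (p : int) : {vspace V} := eigsp D (p%:~R).

Definition has_depth (D : 'End(V)) (d : int) : Prop :=
  gcomp D (- d) != 0%VS /\ forall p : int, p < - d -> gcomp D p = 0%VS.

Definition in_der_deg (D : 'End(V)) (p : int) (f : 'End(V)) : Prop :=
  is_der f /\ forall (q : int) v, v \in gcomp D q -> f v \in gcomp D (q + p).

Definition der_has_depth (D : 'End(V)) (d : int) : Prop :=
  (exists f, in_der_deg D (- d) f /\ f != 0) /\
  forall p : int, p < - d -> forall f, in_der_deg D p f -> f = 0.

(* the grading operator lies in h, i.e. it is inner: D = ad h with h even *)
Definition inner_grading (D : 'End(V)) : Prop :=
  exists h, h \in V0 /\ forall v, D v = br h v.

(* irreducible of G-type: nonzero and no nontrivial invariant subspace,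
   Z_2-graded or not, for the adjoint action of A on M *)
Definition irreducible_G (A M : {vspace V}) : Prop :=
  M != 0%VS /\
  forall W : {vspace V}, (W <= M)%VS ->
    (forall a w, a \in A -> w \in W -> br a w \in W) -> W = 0%VS \/ W = M.

End LieSuper.

(* Main.v *)
Require Import Defs.
From HB Require Import structures.
From mathcomp Require Import all_boot all_order all_algebra.
From mathcomp Require Import complex reals.
From mathcomp Require Import zify.
From Stdlib Require Import Classical.
Import Order.TTheory GRing.Theory Num.Theory.
Local Open Scope ring_scope.
Local Open Scope complex_scope.
Set Implicit Arguments. Unset Strict Implicit. Unset Printing Implicit Defensive.

Section Basics.
Variables (R : realType) (V : vectType R[i]) (V0 V1 : {vspace V}) (br : V -> V -> V).
Hypothesis Hdir : directv (V0 + V1)%VS.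
Hypothesis Hfull : (V0 + V1)%VS = fullv.
Hypothesis Hl1 : forall a x y z, br (a *: x + y) z = a *: br x z + br y z.
Hypothesis Hl2 : forall a x y z, br x (a *: y + z) = a *: br x y + br x z.
Hypothesis Hpar : forall i j x y, x \in par V0 V1 i -> y \in par V0 V1 j -> br x y \in par V0 V1 (i (+) j).
Hypothesis Hsym : forall i j x y, x \in par V0 V1 i -> y \in par V0 V1 j -> br x y = - (ssign R[i] i j *: br y x).
Hypothesis Hjac : forall i j x y z, x \in par V0 V1 i -> y \in par V0 V1 j ->
         br x (br y z) = br (br x y) z + ssign R[i] i j *: br y (br x z).

Local Notation par := (par V0 V1).
Lemma hpar i j x y : x \in par i -> y \in par j -> br x y \in par (i (+) j).
Proof. exact: Hpar. Qed.
Lemma hsym i j x y : x \in par i -> y \in par j -> br x y = - (ssign R[i] i j *: br y x).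
Proof. exact: Hsym. Qed.
Lemma hjac i j x y : x \in par i -> y \in par j -> forall z,
  br x (br y z) = br (br x y) z + ssign R[i] i j *: br y (br x z).
Proof. by move=> *; apply: Hjac. Qed.


Lemma brlinR y : linear (br y).
Proof. by move=> a u v; rewrite Hl2. Qed.
Definition brL y : {linear V -> V} :=
  HB.pack (br y) (GRing.isLinear.Build R[i] V V *:%R (br y) (brlinR y)).
Lemma brlinL z : linear (fun x => br x z).
Proof. by move=> a u v; rewrite Hl1. Qed.
Definition brLL z : {linear V -> V} :=
  HB.pack (fun x => br x z) (GRing.isLinear.Build R[i] V V *:%R (fun x => br x z) (brlinL z)).

Lemma adE y v : ad br y v = br y v.
Proof. exact: (lfunE (brL y)). Qed.

Lemma br0r x : br x 0 = 0. Proof. exact: (linear0 (brL x)). Qed.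
Lemma brDr x u v : br x (u + v) = br x u + br x v. Proof. exact: (linearD (brL x)). Qed.
Lemma brZr x a u : br x (a *: u) = a *: br x u. Proof. by have := Hl2 a x u 0; rewrite addr0 br0r addr0. Qed.
Lemma brNr x u : br x (- u) = - br x u. Proof. exact: (linearN (brL x)). Qed.
Lemma brBr x u v : br x (u - v) = br x u - br x v. Proof. exact: (linearB (brL x)). Qed.
Lemma br0l x : br 0 x = 0. Proof. exact: (linear0 (brLL x)). Qed.
Lemma brDl x u v : br (u + v) x = br u x + br v x. Proof. exact: (linearD (brLL x)). Qed.
Lemma brZl x a u : br (a *: u) x = a *: br u x. Proof. by have := Hl1 a u 0 x; rewrite addr0 br0l addr0. Qed.
Lemma brNl x u : br (- u) x = - br u x. Proof. exact: (linearN (brLL x)). Qed.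
Lemma brBl x u v : br (u - v) x = br u x - br v x. Proof. exact: (linearB (brLL x)). Qed.
Lemma br_sumr x I (l : seq I) (Q : pred I) F :
  br x (\sum_(i <- l | Q i) F i) = \sum_(i <- l | Q i) br x (F i).
Proof. exact: (linear_sum (brL x)). Qed.
Lemma br_suml x I (l : seq I) (Q : pred I) F :
  br (\sum_(i <- l | Q i) F i) x = \sum_(i <- l | Q i) br (F i) x.
Proof. exact: (linear_sum (brLL x)). Qed.

Lemma pr_ex : {f : bool -> 'End(V) | forall i, f i = P V0 V1 i}.
Proof. by exists (P V0 V1). Qed.
Definition pp := proj1_sig pr_ex.
Lemma ppE i : pp i = P V0 V1 i. Proof. exact: (proj2_sig pr_ex). Qed.

Lemma cap01 : (V0 :&: V1 = 0)%VS. Proof. exact/directv_addP. Qed.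
Lemma cap10 : (V1 :&: V0 = 0)%VS. Proof. by rewrite capvC cap01. Qed.

Lemma Pmem i v : pp i v \in par i.
Proof. by rewrite ppE; case: i; apply: memv_pi. Qed.
Lemma Psum v : pp false v + pp true v = v.
Proof. by rewrite !ppE /= daddv_pi_add ?cap01 // Hfull memvf. Qed.
Lemma Pid i v : v \in par i -> pp i v = v.
Proof. by rewrite ppE; case: i => /= Hv; rewrite daddv_pi_id ?cap01 ?cap10. Qed.
Lemma par_cap i v : v \in par i -> v \in par (~~ i) -> v = 0.
Proof.
move=> H1 H2; apply/eqP; rewrite -memv0.
by case: i H1 H2 => /= H1 H2; rewrite -?cap01 -?cap10 memv_cap H1 H2.
Qed.
Lemma Poth i v : v \in par i -> pp (~~ i) v = 0.
Proof.
move=> Hv; have := Psum v; case: i Hv => Hv; rewrite (Pid Hv) /=.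
  by move/(canRL (addrK _)); rewrite subrr.
by move/(canRL (addKr _)); rewrite addrC subrr.
Qed.
Lemma Psplit_uniq i a b : a \in par i -> b \in par (~~ i) -> a + b = 0 -> a = 0 /\ b = 0.
Proof.
move=> Ha Hb H; have Ea : a = - b by apply/eqP; rewrite -subr_eq0 opprK H.
have Ha' : a \in par (~~ i) by rewrite Ea rpredN.
by have a0 := par_cap Ha Ha'; split => //; move: H; rewrite a0 add0r.
Qed.

Lemma ssignF j : ssign R[i] false j = 1. Proof. by []. Qed.
Lemma ssignF2 j : ssign R[i] j false = 1. Proof. by rewrite /ssign andbF. Qed.
Lemma ssign_neq0 i j : ssign R[i] i j != 0.
Proof. by rewrite /ssign; case: (i && j); rewrite ?expr1 ?expr0 ?oppr_eq0 oner_eq0. Qed.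


Definition sg : 'End(V) := (pp false - pp true)%R.
Lemma sgE v : sg v = pp false v - pp true v.
Proof. by rewrite /sg add_lfunE opp_lfunE. Qed.
Lemma sg_hom i v : v \in par i -> sg v = if i then - v else v.
Proof.
move=> Hv; rewrite sgE; case: i Hv => Hv.
  by rewrite (Pid Hv) (Poth Hv) sub0r.
by rewrite (Pid Hv) (Poth Hv) subr0.
Qed.
Lemma sgK v : sg (sg v) = v.
Proof.
rewrite [sg v]sgE raddfB /= (sg_hom (Pmem false v)) (sg_hom (Pmem true v)) /=.
by rewrite opprK Psum.
Qed.
Lemma sym_even a z : z \in par false -> br a z = - br z a.
Proof.
move=> Hz; rewrite -[a]Psum brDl brDr opprD.
by rewrite (hsym (Pmem false a) Hz) (hsym (Pmem true a) Hz) /ssign /= expr0 !scale1r.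
Qed.
Lemma sym_odd a z : z \in par true -> br a z = - br z (sg a).
Proof.
move=> Hz; rewrite sgE -[a in LHS]Psum brDl brBr opprB.
rewrite (hsym (Pmem false a) Hz) (hsym (Pmem true a) Hz) /ssign /= expr0 expr1 !scale1r.
by rewrite scaleN1r opprK addrC.
Qed.

Lemma Pbr j k z x (i : bool) : z \in par k -> x \in par i ->
  pp j (br z x) = if j == i (+) k then br z x else 0.
Proof.
move=> Hz Hx; have Hb := hpar Hz Hx.
case: (boolP (j == i (+) k)) => [/eqP Ej|Hne]; first by rewrite Ej addbC Pid.
have -> : j = ~~ (k (+) i) by rewrite addbC; move: Hne; case: j; case: (i (+) k).
exact: Poth.
Qed.


Lemma sg_br x y : sg (br x y) = br (sg x) (sg y).
Proof.
rewrite -[x]Psum -[y]Psum.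
set x0 := pp false x; set x1 := pp true x; set y0 := pp false y; set y1 := pp true y.
have H0 : x0 \in par false by apply: Pmem.
have H1 : x1 \in par true by apply: Pmem.
have K0 : y0 \in par false by apply: Pmem.
have K1 : y1 \in par true by apply: Pmem.
rewrite !brDl !brDr !raddfD /= (sg_hom H0) (sg_hom H1) (sg_hom K0) (sg_hom K1) /=.
rewrite (sg_hom (hpar H0 K0)) (sg_hom (hpar H0 K1)) (sg_hom (hpar H1 K0)) (sg_hom (hpar H1 K1)) /=.
rewrite brBl !brBr; move: (br x0 y0) (br x0 y1) (br x1 y0) (br x1 y1) => a b c d.
by rewrite opprB [d - c]addrC.
Qed.

Hypothesis Hna : exists x y, br x y != 0.
Hypothesis Hsimp : forall I : {vspace V}, homogeneous V0 V1 I ->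
    (forall x y, y \in I -> br x y \in I) -> I = 0%VS \/ I = fullv.

Lemma homog_of (J : {vspace V}) : (forall w, w \in J -> pp false w \in J) -> homogeneous V0 V1 J.
Proof.
move=> HJ; apply: subv_anti; apply/andP; split; last first.
  by rewrite subv_add !capvSl.
apply/subvP => w Hw; rewrite -[w]Psum; apply: memv_add; rewrite memv_cap.
  by rewrite HJ // (Pmem false w).
have E : pp true w = w - pp false w.
  by apply/eqP; rewrite eq_sym subr_eq [pp true w + _]addrC Psum.
have := Pmem true w; rewrite /= => ->; rewrite andbT E rpredB ?HJ //.
Qed.

Lemma two_p0 w : pp false w = 2^-1 *: (w + sg w).
Proof.
have -> : w + sg w = 2 *: pp false w.
  rewrite sgE; move: (Psum w); move: (pp false w) (pp true w) => a b <-.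
  by rewrite addrACA subrr addr0 scaler_nat mulr2n.
by rewrite scalerA mulVf ?scale1r // pnatr_eq0.
Qed.

Lemma homog_sg (J : {vspace V}) : (forall w, w \in J -> sg w \in J) -> homogeneous V0 V1 J.
Proof. by move=> HJ; apply: homog_of => w Hw; rewrite two_p0 rpredZ // rpredD // HJ. Qed.

Lemma USimp (I : {vspace V}) : (forall x y, y \in I -> br x y \in I) -> I = 0%VS \/ I = fullv.
Proof.
move=> HI.
have HsI : forall x y, y \in (sg @: I)%VS -> br x y \in (sg @: I)%VS.
  move=> x y /memv_imgP [a Ha ->]; rewrite -[x]sgK -sg_br; exact/memv_img/HI.
have HsgI : forall w, w \in (sg @: I)%VS -> sg w \in I.
  by move=> w /memv_imgP [a Ha ->]; rewrite sgK.
have HsgI' : forall w, w \in I -> sg w \in (sg @: I)%VS by move=> w Hw; exact: memv_img.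
set J1 := (I + sg @: I)%VS; set J2 := (I :&: sg @: I)%VS.
have hJ1 : homogeneous V0 V1 J1.
  apply: homog_sg => w /memv_addP [a Ha [b Hb ->]]; rewrite raddfD /= addrC.
  by apply: memv_add; [apply: HsgI | apply: HsgI'].
have hJ2 : homogeneous V0 V1 J2.
  apply: homog_sg => w; rewrite !memv_cap => /andP [H1 H2].
  by rewrite HsgI' // HsgI.
have iJ1 : forall x y, y \in J1 -> br x y \in J1.
  by move=> x y /memv_addP [a Ha [b Hb ->]]; rewrite brDr memv_add ?HI ?HsI.
have iJ2 : forall x y, y \in J2 -> br x y \in J2.
  by move=> x y; rewrite !memv_cap => /andP [H1 H2]; rewrite HI ?HsI.
case: (Hsimp hJ1 iJ1) => [J10|J1f].
  by left; apply/eqP; rewrite -subv0 -J10 addvSl.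
case: (Hsimp hJ2 iJ2) => [J20|J2f]; last first.
  by right; apply/eqP; rewrite eqEsubv subvf -J2f capvSl.
have odd1 : forall x a, x \in par true -> a \in I -> br x (sg a) = 0.
  move=> x a Hx Ha.
  have : x \in J1 by rewrite J1f memvf.
  move=> /memv_addP [c Hc [sb /memv_imgP [b Hb ->]]] Ex.
  have Ex' : x = pp true (c - b).
    by rewrite -(Pid Hx) Ex !raddfD raddfN /= sgE raddfB /= !(Pid (Pmem _ _)) (Poth (Pmem false b)) sub0r.
  have Hcb : c - b \in I by rewrite rpredB.
  have E1 : br a (c - b) \in I by apply: HI.
  have E2 : br a (pp false (c - b)) \in I.
    by rewrite sym_even ?Pmem // rpredN HI.
  have E3 : br (pp true (c - b)) (sg a) \in J2.
    rewrite memv_cap; apply/andP; split; last exact/HsI/HsgI'.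
    have EQ : br a (c - b) = br a (pp false (c - b)) - br (pp true (c - b)) (sg a).
      by rewrite -sym_odd ?Pmem // -brDr Psum.
    have -> : br (pp true (c - b)) (sg a) = br a (pp false (c - b)) - br a (c - b).
      by rewrite EQ opprB addrCA subrr addr0.
    by rewrite rpredB.
  by move: E3; rewrite J20 memv0 -Ex' => /eqP.
have odd2 : forall x v, x \in par true -> br x v = 0.
  move=> x v Hx; have : v \in J1 by rewrite J1f memvf.
  move=> /memv_addP [a Ha [sb /memv_imgP [b Hb ->] ->]].
  rewrite brDr odd1 // addr0.
  have := odd1 x a Hx Ha; move/(congr1 sg); rewrite sg_br (sg_hom Hx) sgK brNl raddf0.
  by move/eqP; rewrite oppr_eq0 => /eqP.
have hV1 : homogeneous V0 V1 V1.
  by rewrite /homogeneous cap10 capvv add0v.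
have iV1 : forall x y, y \in V1 -> br x y \in V1.
  by move=> x y Hy; rewrite (sym_odd _ Hy) odd2 // oppr0 mem0v.
case: (Hsimp hV1 iV1) => [V10|V1f].
  left; apply/eqP; rewrite -subv0 -J20; apply/subvP => a Ha.
  have sga : sg a = a.
    have : pp true a \in V1 by exact: (Pmem true a).
    rewrite V10 memv0 => /eqP E0.
    by rewrite sgE E0 subr0 -{2}(Psum a) E0 addr0.
  by rewrite memv_cap Ha -sga HsgI'.
exfalso; case: Hna => x [y]; rewrite odd2 ?eqxx //.
by rewrite /= V1f memvf.
Qed.


Lemma center_r z : (forall x, br x z = 0) -> z = 0.
Proof.
move=> Hz.
have iz : forall x y, y \in <[z]>%VS -> br x y \in <[z]>%VS.
  by move=> x y /vlineP [k ->]; rewrite brZr Hz scaler0 mem0v.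
case: (USimp iz) => [z0|zf].
  by apply/eqP; rewrite -memv0 -z0 memv_line.
exfalso; case: Hna => x [y].
have : y \in <[z]>%VS by rewrite zf memvf.
by case/vlineP => k ->; rewrite brZr Hz scaler0 eqxx.
Qed.

Lemma flip_center z : (forall v, br z v = 0) -> forall x, br x z = 0.
Proof.
move=> Hz.
have Hh : forall i v, br (pp i z) v = 0.
  have Hh1 : forall i j v, v \in par j -> br (pp i z) v = 0.
    move=> i j v Hv.
    have B0 := hpar (Pmem false z) Hv; have B1 := hpar (Pmem true z) Hv.
    have := Hz v; rewrite -{1}[z]Psum brDl => E.
    have [] := @Psplit_uniq j _ _ B0 B1 E.
    by case: i.
  move=> i v; rewrite -[v]Psum brDr (Hh1 i false) ?(Hh1 i true) ?addr0 //; exact: Pmem.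
move=> x; rewrite -[z]Psum brDr.
rewrite (sym_even _ (Pmem false z)) (sym_odd _ (Pmem true z)) !Hh.
by rewrite oppr0 addr0.
Qed.

Lemma center_l z : (forall v, br z v = 0) -> z = 0.
Proof. by move=> Hz; apply: center_r; apply: flip_center. Qed.


Section SeqSums.
Variables (I : eqType) (l : seq I) (Pp : pred I) (U : I -> {vspace V}).

Lemma sum_ind (Q : V -> Prop) : Q 0 -> (forall a b, Q a -> Q b -> Q (a + b)) ->
  (forall i, i \in l -> Pp i -> forall u, u \in U i -> Q u) ->
  forall v, v \in (\sum_(i <- l | Pp i) U i)%VS -> Q v.
Proof.
move=> Q0 QD; elim: l => [|a l' IH] H v.
  by rewrite big_nil memv0 => /eqP ->.
rewrite big_cons; case: ifP => Pa.
  case/memv_addP => u Hu [w Hw ->]; apply: QD; first exact: (H a (mem_head _ _)).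
  by apply: IH => // i Hi; apply: H; rewrite in_cons Hi orbT.
by apply: IH => // i Hi; apply: H; rewrite in_cons Hi orbT.
Qed.

Lemma sum_sup i u : i \in l -> Pp i -> u \in U i -> u \in (\sum_(i <- l | Pp i) U i)%VS.
Proof.
elim: l => [|a l' IH] //; rewrite in_cons big_cons => /orP [/eqP ->|Hi] Pi Hu.
  by rewrite Pi -[u]addr0 memv_add ?mem0v.
by case: ifP => _; rewrite ?IH // -[u]add0r memv_add ?mem0v ?IH.
Qed.

Lemma sum_sub (X : {vspace V}) : (forall i, i \in l -> Pp i -> (U i <= X)%VS) ->
  (\sum_(i <- l | Pp i) U i <= X)%VS.
Proof.
move=> H; apply/subvP; apply: sum_ind; first exact: mem0v.
  by move=> a b; apply: rpredD.
by move=> i Hi Pi u Hu; apply: (subvP (H i Hi Pi)).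
Qed.
End SeqSums.


Variable D : 'End(V).
Hypothesis HDs : is_sder V0 V1 br false D.
Variable r : seq int.
Hypothesis Hr : (fullv <= \sum_(p <- r) eigsp D p%:~R)%VS.
Hypothesis Hdep1 : gcomp D (- 1) != 0%VS.
Hypothesis Hdep2 : forall p : int, p < - 1 -> gcomp D p = 0%VS.

Local Notation s q := (gcomp D q).

Lemma sP v (q : int) : (v \in s q) = (D v == q%:~R *: v).
Proof.
by rewrite /gcomp /eigsp memv_ker add_lfunE opp_lfunE scale_lfunE id_lfunE subr_eq0.
Qed.
Lemma sE v (q : int) : v \in s q -> D v = q%:~R *: v.
Proof. by rewrite sP => /eqP. Qed.

Lemma Dpar i v : v \in par i -> D v \in par i.
Proof. by move=> Hv; have := HDs.1 i v Hv; rewrite addbF. Qed.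

Lemma Dbr x y : D (br x y) = br (D x) y + br x (D y).
Proof.
rewrite -{1}[x]Psum brDl raddfD /= (HDs.2 _ _ _ (Pmem false x)) (HDs.2 _ _ _ (Pmem true x)).
by rewrite !ssignF !scale1r addrACA -!brDl -raddfD /= Psum.
Qed.

Lemma ppP i j u : u \in par j -> pp i u = if i == j then u else 0.
Proof.
move=> Hu; case: (boolP (i == j)) => [/eqP ->|Hne]; first exact: Pid.
have -> : i = ~~ j by move: Hne; case: i; case: (j).
exact: Poth.
Qed.

Lemma Dpp i v : D (pp i v) = pp i (D v).
Proof.
rewrite -{2}[v]Psum raddfD /= raddfD /= (ppP i (Dpar (Pmem false v))) (ppP i (Dpar (Pmem true v))).
by case: i; rewrite /= ?addr0 ?add0r.
Qed.

Lemma s_pp i v q : v \in s q -> pp i v \in s q.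
Proof. by rewrite !sP Dpp => /eqP ->; rewrite linearZ. Qed.

Lemma s_br x y p q : x \in s p -> y \in s q -> br x y \in s (p + q).
Proof.
move=> Hx Hy; rewrite sP Dbr (sE Hx) (sE Hy) brZl brZr rmorphD scalerDl.
by [].
Qed.

Lemma s_sub q : forall v, v \in s q -> forall a, a *: v \in s q.
Proof. by move=> v Hv a; rewrite rpredZ. Qed.


Definition Dm (q : int) : 'End(V) := (D - q%:~R *: \1)%VF.
Lemma Dm_s v (c q : int) : v \in s c -> Dm q v = (c - q)%:~R *: v.
Proof.
move=> Hv; rewrite /Dm add_lfunE opp_lfunE scale_lfunE id_lfunE (sE Hv).
by rewrite -scalerBl rmorphB.
Qed.
Lemma Dm_pres v c q : v \in s c -> Dm q v \in s c.
Proof. by move=> Hv; rewrite (Dm_s _ Hv) rpredZ. Qed.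

Definition prodm (l : seq int) : 'End(V) := foldr (fun q f => (f \o Dm q)%VF) \1%VF l.

Lemma prodm0 l v : v \in (\sum_(q <- l) s q)%VS -> prodm l v = 0.
Proof.
elim: l v => [|a l IH] v.
  by rewrite big_nil memv0 => /eqP ->; rewrite linear0.
rewrite big_cons /= => /memv_addP [u Hu [w Hw ->]].
rewrite comp_lfunE raddfD /= (Dm_s _ Hu) subrr scale0r add0r; apply: IH.
move: w Hw; apply: (@sum_ind _ l (fun _ => true) (fun q => s q) (fun x => Dm a x \in (\sum_(q <- l) s q)%VS)); first by rewrite linear0 mem0v.
  by move=> a' b Ha Hb; rewrite raddfD rpredD.
by move=> i Hi _ u' Hu'; exact: (@sum_sup _ l (fun _ => true) (fun q => s q) i _ Hi isT (Dm_pres a Hu')).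
Qed.

Lemma prodmE l v c : v \in s c -> prodm l v = (\prod_(q <- l) (c - q)%:~R) *: v.
Proof.
move=> Hv; elim: l => [|a l IH]; first by rewrite big_nil scale1r /= id_lfunE.
rewrite /= comp_lfunE (Dm_s _ Hv) linearZ /= IH big_cons scalerA mulrC.
by [].
Qed.

Lemma G4 v c l : v \in s c -> v \in (\sum_(q <- l) s q)%VS -> c \notin l -> v = 0.
Proof.
move=> Hv Hs Hc; have := prodm0 Hs; rewrite (prodmE _ Hv).
move/eqP; rewrite scaler_eq0 => /orP [|/eqP //].
rewrite prodf_seq_eq0 => /hasP [q Hq]; rewrite intr_eq0 subr_eq0 => /eqP E.
by move: Hc; rewrite E Hq.
Qed.

Lemma s_out c : c \notin r -> s c = 0%VS.
Proof.
move=> Hc; apply/eqP; rewrite -subv0; apply/subvP => v Hv.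
by rewrite memv0 (G4 Hv (subvP Hr v (memvf v)) Hc).
Qed.

Definition N := (\sum_(q <- r | (0 <= q)%R) s q)%VS.

Lemma sN c : 0 <= c -> (s c <= N)%VS.
Proof.
move=> Hc; case: (boolP (c \in r)) => Hr'.
  by apply/subvP => v Hv; exact: (@sum_sup _ r (fun q => (0 <= q)%R) (fun q => s q) c v Hr' Hc Hv).
by rewrite s_out ?sub0v.
Qed.

Lemma m1N v : v \in s (- 1) -> v \in N -> v = 0.
Proof.
move=> Hv HN; apply: (G4 Hv (l := [seq q <- r | 0 <= q])); first by rewrite big_filter.
by rewrite mem_filter.
Qed.

Lemma all_ind (Q : V -> Prop) : Q 0 -> (forall a b, Q a -> Q b -> Q (a + b)) ->
  (forall q u, u \in s q -> Q u) -> forall u, Q u.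
Proof.
move=> Q0 QD H u.
apply: (@sum_ind _ r (fun _ => true) (fun p : int => eigsp D p%:~R) Q Q0 QD _ u (subvP Hr u (memvf u))).
by move=> i _ _ u' Hu'; exact: (H i).
Qed.

Lemma N_ind (Q : V -> Prop) : Q 0 -> (forall a b, Q a -> Q b -> Q (a + b)) ->
  (forall q u, 0 <= q -> u \in s q -> Q u) -> forall u, u \in N -> Q u.
Proof.
move=> Q0 QD H; apply: (@sum_ind _ r (fun q => (0 <= q)%R) (fun q => s q) Q Q0 QD).
by move=> i _ Pi u Hu; apply: (H i).
Qed.

Lemma decomp u : exists y n, [/\ y \in s (- 1), n \in N & u = y + n].
Proof.
move: u; apply: all_ind.
- by exists 0, 0; rewrite !mem0v addr0.
- move=> a b [y [n [Hy Hn ->]]] [y' [n' [Hy' Hn' ->]]].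
  by exists (y + y'), (n + n'); rewrite !rpredD // addrACA.
- move=> q u Hu; case: (ltrP q (- 1)) => Hq.
    move: Hu; rewrite Hdep2 // memv0 => /eqP ->.
    by exists 0, 0; rewrite !mem0v addr0.
  case: (boolP (q == - 1)) => [/eqP Eq|Hne].
    by exists u, 0; rewrite mem0v addr0 -Eq.
  exists 0, u; rewrite mem0v add0r; split => //.
  apply: (subvP (sN _)) Hu; move: Hq Hne; lia.
Qed.


Lemma chain (f : {vspace V} -> {vspace V}) (Inv : {vspace V} -> Prop) S0 :
  (forall S, (S <= f S)%VS) -> (forall S, Inv S -> Inv (f S)) -> Inv S0 ->
  exists S, [/\ Inv S, (S0 <= S)%VS & f S = S].
Proof.
move=> Hf HI H0.
have grow : forall n, (forall m, (m < n)%N -> f (iter m f S0) != iter m f S0) ->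
    (n <= \dim (iter n f S0))%N.
  elim=> [|n IH] H //=.
  have Hn := IH (fun m Hm => H m (leq_trans Hm (leqnSn n))).
  have Hlt : (\dim (iter n f S0) < \dim (f (iter n f S0)))%N.
    by rewrite (ltn_leqif (dimv_leqif_eq (Hf _))) eq_sym (H n (ltnSn n)).
  exact: leq_ltn_trans Hn Hlt.
have Hinv : forall m, Inv (iter m f S0) /\ (S0 <= iter m f S0)%VS.
  elim=> [|m [IH1 IH2]] /=; first by rewrite subvv.
  by split; [apply: HI | apply: subv_trans IH2 (Hf _)].
case: (boolP [exists m : 'I_(\dim {:V}).+1, f (iter m f S0) == iter m f S0]).
  case/existsP => m /eqP Em; exists (iter m f S0).
  by have [? ?] := Hinv m; split.
rewrite negb_exists => /forallP Hn.
have := grow (\dim {:V}).+1 (fun m Hm => Hn (Ordinal Hm)).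
by rewrite ltnNge dimvS ?subvf.
Qed.

Definition brs (U S : {vspace V}) := (\sum_(b <- vbasis U) (ad br b @: S))%VS.

Lemma brs_mem (U S : {vspace V}) u v : u \in U -> v \in S -> br u v \in brs U S.
Proof.
move=> Hu Hv; rewrite (coord_vbasis Hu) br_suml; apply: rpred_sum => i _.
rewrite brZl rpredZ //; apply: (@sum_sup _ _ xpredT (fun b => ad br b @: S)%VS ((vbasis U)`_i)).
- exact: memt_nth.
- by [].
- by rewrite -adE memv_img.
Qed.

Lemma brs_ind (U S : {vspace V}) (Q : V -> Prop) : Q 0 -> (forall a b, Q a -> Q b -> Q (a + b)) ->
  (forall u v, u \in U -> v \in S -> Q (br u v)) -> forall w, w \in brs U S -> Q w.
Proof.
move=> Q0 QD H; apply: (@sum_ind _ (vbasis U) (fun _ => true) (fun b => ad br b @: S)%VS Q Q0 QD).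
move=> b Hb _ u /memv_imgP [v Hv ->].
by rewrite adE; apply: H => //; apply: vbasis_mem.
Qed.

Lemma brs_sub (U S X : {vspace V}) : (forall u v, u \in U -> v \in S -> br u v \in X) -> (brs U S <= X)%VS.
Proof.
move=> H; apply/subvP; apply: brs_ind => //; first exact: mem0v.
by move=> a b; apply: rpredD.
Qed.


Lemma brNN u v : u \in N -> v \in N -> br u v \in N.
Proof.
move=> Hu Hv; move: u Hu; apply: N_ind; first by rewrite br0l mem0v.
  by move=> a b Ha Hb; rewrite brDl rpredD.
move=> q u Hq Hu; move: v Hv; apply: N_ind; first by rewrite br0r mem0v.
  by move=> a b Ha Hb; rewrite brDr rpredD.
move=> p v Hp Hv; apply: (subvP (sN _)) (s_br Hu Hv).
by rewrite addr_ge0.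
Qed.

Lemma split_ind q (Q : V -> Prop) : Q 0 -> (forall a b, Q a -> Q b -> Q (a + b)) ->
  (forall i u, u \in s q -> u \in par i -> Q u) -> forall u, u \in s q -> Q u.
Proof.
move=> Q0 QD H u Hu; rewrite -[u]Psum; apply: QD; [apply: (H false) | apply: (H true)]; by [apply: s_pp | apply: Pmem].
Qed.

Lemma KeyJ (S : {vspace V}) :
  (forall y v, y \in s (- 1) -> v \in S -> br y v \in S) ->
  forall y u v, y \in s (- 1) -> u \in N -> v \in S -> br y (br u v) \in (S + brs N S)%VS.
Proof.
move=> HS y u v Hy Hu Hv; move: u Hu; apply: N_ind.
- by rewrite br0l br0r mem0v.
- by move=> a b Ha Hb; rewrite brDl brDr rpredD.
move=> q u Hq; apply: (split_ind (Q := fun u => br y (br u v) \in (S + brs N S)%VS)).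
- by rewrite br0l br0r mem0v.
- by move=> a b Ha Hb; rewrite brDl brDr rpredD.
move=> i {}u Hu Hui; move: y Hy; apply: (split_ind (Q := fun y => br y (br u v) \in (S + brs N S)%VS)).
- by rewrite br0l mem0v.
- by move=> a b Ha Hb; rewrite brDl rpredD.
move=> j {}y Hy Hyj; rewrite (hjac Hyj Hui); apply: rpredD; last first.
  apply: rpredZ; apply: (subvP (addvSr _ _)); apply: brs_mem; last exact: HS.
  by apply: (subvP (sN Hq)).
have Hyu := s_br Hy Hu.
case: (boolP (q == 0)) => [/eqP Eq|Hq0].
  apply: (subvP (addvSl S (brs N S))); apply: HS Hv.
  by move: Hyu; rewrite Eq addr0.
apply: (subvP (addvSr S (brs N S))); apply: brs_mem Hv.
apply: (subvP (sN _)) Hyu; move: Hq Hq0; lia.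
Qed.

Lemma gen_ideal (S0 B : {vspace V}) : (S0 <= B)%VS ->
  (forall y v, y \in s (- 1) -> v \in S0 -> br y v \in S0) ->
  (forall u v, u \in N -> v \in B -> br u v \in B) ->
  exists S, [/\ (S0 <= S)%VS, (S <= B)%VS & forall x v, v \in S -> br x v \in S].
Proof.
move=> H0B H0 HB.
pose Inv (S : {vspace V}) := (S <= B)%VS /\ (forall y v, y \in s (- 1) -> v \in S -> br y v \in S).
have HI : forall S, Inv S -> Inv (S + brs N S)%VS.
  move=> S [SB SI]; split.
    rewrite subv_add SB /=; apply: brs_sub => u v Hu Hv.
    by apply: HB (subvP SB _ Hv).
  move=> y v Hy /memv_addP [a Ha [t Ht ->]]; rewrite brDr rpredD //.
    by apply: (subvP (addvSl S (brs N S))); apply: SI Ha.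
  move: t Ht; apply: (brs_ind (Q := fun t => br y t \in (S + brs N S)%VS)).
  - by rewrite br0r mem0v.
  - by move=> a' b' Ha' Hb'; rewrite brDr rpredD.
  by move=> u v' Hu Hv'; apply: KeyJ.
have I0 : Inv S0 by split.
have [S [[SB SI] S0S fS]] := @chain (fun S => S + brs N S)%VS Inv S0 (fun S => addvSl _ _) HI I0.
exists S; split => // x v Hv; have [y [n [Hy Hn ->]]] := decomp x.
rewrite brDl; apply: rpredD; first exact: SI Hy Hv.
have : br n v \in (S + brs N S)%VS.
  by apply: (subvP (addvSr S (brs N S))); exact: brs_mem.
by rewrite fS.
Qed.


Lemma m1_sub0 (X : {vspace V}) : (s (- 1) <= X)%VS -> (X <= N)%VS -> False.
Proof.
move=> H1 H2; move/negP: Hdep1; apply; rewrite -subv0; apply/subvP => v Hv.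
by rewrite memv0 (m1N Hv (subvP H2 _ (subvP H1 _ Hv))).
Qed.

Lemma Trans k w : 0 <= k -> w \in s k -> (forall y, y \in s (- 1) -> br y w = 0) -> w = 0.
Proof.
move=> Hk Hw Hy.
have G1 : (<[w]> <= N)%VS by rewrite -memvE (subvP (sN Hk)).
have G2 : forall y v, y \in s (- 1) -> v \in <[w]>%VS -> br y v \in <[w]>%VS.
  by move=> y v Hy' /vlineP [c ->]; rewrite brZr Hy // scaler0 mem0v.
have [S [S0S SB SI]] := @gen_ideal <[w]>%VS N G1 G2 brNN.
case: (USimp SI) => [S0|Sf].
  by apply/eqP; rewrite -memv0 -S0 (subvP S0S) // memv_line.
by exfalso; apply: (@m1_sub0 S) => //; rewrite Sf subvf.
Qed.

Lemma irrG : irreducible_G br (s 0) (s (- 1)).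
Proof.
split => // W HW Hinv.
have G2 : forall y v, y \in s (- 1) -> v \in W -> br y v \in W.
  move=> y v Hy Hv; have := s_br Hy (subvP HW _ Hv).
  by rewrite Hdep2 // memv0 => /eqP ->; rewrite mem0v.
have G3 : forall u v, u \in N -> v \in (W + N)%VS -> br u v \in (W + N)%VS.
  move=> u v Hu /memv_addP [a Ha [n Hn ->]]; rewrite brDr; apply: rpredD; last first.
    by apply: (subvP (addvSr W N)); apply: brNN.
  move: u Hu; apply: (N_ind (Q := fun u => br u a \in (W + N)%VS)).
  - by rewrite br0l mem0v.
  - by move=> a' b' Ha' Hb'; rewrite brDl rpredD.
  move=> q u Hq Hu; have Hua := s_br Hu (subvP HW _ Ha).
  case: (boolP (q == 0)) => [/eqP Eq|Hq0].
    apply: (subvP (addvSl W N)); apply: Hinv Ha.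
    by rewrite -Eq.
  apply: (subvP (addvSr W N)); apply: (subvP (sN _)) Hua; move: Hq Hq0; lia.
have [S [S0S SB SI]] := @gen_ideal W (W + N)%VS (addvSl W N) G2 G3.
case: (USimp SI) => [S0|Sf].
  by left; apply/eqP; rewrite -subv0 -S0.
right; apply: subv_anti; rewrite HW /=; apply/subvP => v Hv.
have : v \in (W + N)%VS by rewrite (subvP SB) // Sf memvf.
case/memv_addP => a Ha [n Hn Ev].
have En : n = v - a by rewrite Ev addrAC subrr add0r.
have Hn1 : n \in s (- 1) by rewrite En; apply: rpredB => //; apply: (subvP HW).
by rewrite Ev (m1N Hn1 Hn) addr0.
Qed.


Lemma up_zero m : 0 <= m -> s m = 0%VS -> forall n : nat, s (m + n%:Z) = 0%VS.
Proof.
move=> Hm Hs; elim=> [|n IH]; first by rewrite addr0.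
apply/eqP; rewrite -subv0; apply/subvP => v Hv; rewrite memv0; apply/eqP.
apply: (Trans _ Hv); first by move: Hm; lia.
move=> y Hy; have := s_br Hy Hv.
rewrite (_ : -1 + (m + n.+1%:Z) = m + n%:Z); last by lia.
by rewrite IH memv0 => /eqP.
Qed.

Lemma N0_false : (forall n, n \in N -> n = 0) -> False.
Proof.
move=> HN; case: Hna => x [y]; have [y1 [n1 [Hy1 Hn1 ->]]] := decomp x.
have [y2 [n2 [Hy2 Hn2 ->]]] := decomp y.
rewrite (HN _ Hn1) (HN _ Hn2) !addr0; have := s_br Hy1 Hy2.
by rewrite Hdep2 // memv0 => ->.
Qed.

Lemma s0_neq0 : s 0 != 0%VS.
Proof.
apply/negP => /eqP H0; apply: N0_false; apply: N_ind => //.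
  by move=> a b -> ->; rewrite addr0.
move=> q u Hq; case: q Hq => // n _.
by rewrite -[Posz n]add0r (up_zero (lexx 0) H0) memv0 => /eqP.
Qed.

Lemma s1_neq0 : s 1 != 0%VS.
Proof.
apply/negP => /eqP H1.
have HN : (N <= s 0)%VS.
  apply: (@sum_sub _ r (fun q => (0 <= q)%R) (fun q => s q) (s 0)) => q _ Hq.
  case: q Hq => [[|n]|n] Hq.
  - exact: subvv.
  - have -> : Posz n.+1 = 1 + n%:Z by lia.
    rewrite (up_zero ler01 H1 n); exact: sub0v.
  - by exfalso; move: Hq.
have iM : forall x y, y \in s (- 1) -> br x y \in s (- 1).
  move=> x y Hy; have [y' [n [Hy' Hn ->]]] := decomp x; rewrite brDl; apply: rpredD.
    have E : s (- 1 + - 1) = 0%VS by apply: Hdep2.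
    move: (s_br Hy' Hy); rewrite E memv0 => /eqP ->; exact: mem0v.
  move: (s_br (subvP HN _ Hn) Hy); rewrite add0r; exact.
case: (USimp iM) => [E|E]; first by move/negP: Hdep1; apply; rewrite E eqxx.
move: s0_neq0; rewrite -subv0 => /subvPn [v Hv]; rewrite memv0 => /negP; apply.
apply/eqP; apply: m1N; first by rewrite E; exact: memvf.
exact: (subvP (sN (lexx 0))).
Qed.

Lemma partv x : x \in s (- 1) -> (forall y, y \in s 0 -> br y x = 0) -> x = 0.
Proof.
move=> Hx Hy.
have inv : forall a w, a \in s 0 -> w \in <[x]>%VS -> br a w \in <[x]>%VS.
  by move=> a w Ha /vlineP [c ->]; rewrite brZr (Hy a Ha) scaler0; exact: mem0v.
have [_ Hirr] := irrG.
have Hxs : (<[x]> <= s (- 1))%VS by rewrite -memvE.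
case: (Hirr <[x]>%VS Hxs inv) => E.
- by apply/eqP; rewrite -memv0 -E; exact: memv_line.
exfalso; move/negP: s0_neq0; apply; rewrite -subv0; apply/subvP => u Hu.
rewrite memv0; apply/eqP; apply: (Trans (lexx 0) Hu) => y.
rewrite -E => /vlineP [c ->]; rewrite brZl.
suff -> : br x u = 0 by rewrite scaler0.
have F : forall i z, z \in par i -> br z x = 0 -> br z (sg x) = 0.
  move=> i z Hz Hzx; rewrite sgE brBr.
  have E0 := hpar Hz (Pmem false x); have E1 := hpar Hz (Pmem true x).
  rewrite addbF in E0; rewrite addbT in E1.
  have := Hzx; rewrite -{1}[x]Psum brDr => Hs.
  have [-> ->] := @Psplit_uniq i _ _ E0 E1 Hs.
  by rewrite subrr.
have H0 : br (pp false u) x = 0 by apply: Hy; exact: s_pp.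
have H1 : br (pp true u) x = 0 by apply: Hy; exact: s_pp.
rewrite -[u]Psum brDr (sym_even _ (Pmem false u)) (sym_odd _ (Pmem true u)).
by rewrite H0 (F true _ (Pmem true u) H1) oppr0 addr0.
Qed.


Local Notation ec := (ecomp V0 V1).

Lemma ecompE e f v : ec e f v = pp (true (+) e) (f (pp true v)) + pp (false (+) e) (f (pp false v)).
Proof. by rewrite /ecomp sum_lfunE big_bool !comp_lfunE !ppE; congr (_ + _). Qed.

Lemma ecomp_sum f : ec false f + ec true f = f.
Proof.
apply/lfunP => v; rewrite add_lfunE !ecompE.
change (pp true (f (pp true v)) + pp false (f (pp false v)) +
  (pp false (f (pp true v)) + pp true (f (pp false v))) = f v).
have Ps' : forall x, pp true x + pp false x = x by move=> x; rewrite addrC Psum.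
by rewrite addrACA Ps' Psum -(raddfD f) Ps'.
Qed.

Lemma Pbr2 j i y u : u \in par i -> pp j (br y u) = br (pp (j (+) i) y) u.
Proof.
move=> Hu; rewrite -{1}[y]Psum brDl raddfD /=.
rewrite (Pbr j (Pmem false y) Hu) (Pbr j (Pmem true y) Hu).
clear Hu; case: i; case: j => /=; rewrite ?addr0 ?add0r //.
Qed.

Lemma ecomp_ad e y : ec e (ad br y) = ad br (pp e y).
Proof.
apply/lfunP => v; rewrite ecompE !adE (Pbr2 _ _ (Pmem true v)) (Pbr2 _ _ (Pmem false v)).
have -> : true (+) e (+) true = e by case: e.
have -> : false (+) e (+) false = e by case: e.
by rewrite -brDr addrC Psum.
Qed.

Lemma sder_ad e z : z \in par e -> is_sder V0 V1 br e (ad br z).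
Proof.
move=> Hz; split.
  by move=> i v Hv; rewrite adE addbC; apply: hpar.
by move=> i x y Hx; rewrite !adE; apply: hjac.
Qed.

Lemma sbr_ad x y v : is_der V0 V1 br x -> sbr V0 V1 x (ad br y) v = br (x y) v.
Proof.
move=> [Hx [Hf Ht]].
rewrite /sbr !big_bool /= !add_lfunE !opp_lfunE !scale_lfunE !comp_lfunE !ecomp_ad !adE.
rewrite (Hf.2 true (pp true y) v (Pmem true y)) (Hf.2 false (pp false y) v (Pmem false y)).
rewrite (Ht.2 true (pp true y) v (Pmem true y)) (Ht.2 false (pp false y) v (Pmem false y)).
rewrite !addrK -!brDl.
rewrite {5}Hx add_lfunE -{5}[y]Psum !raddfD /=.
congr (br _ v).
have -> : ec true x y = ec true x (pp false y) + ec true x (pp true y) by rewrite -raddfD Psum.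
move: (ec true x (pp true y)) (ec true x (pp false y)) (ec false x (pp true y)) (ec false x (pp false y)) => a b c d.
by rewrite (addrC c d) (addrC a b); exact: addrC.
Qed.


Lemma der_sder (x : 'End(V)) : is_der V0 V1 br x -> forall i, is_sder V0 V1 br i (ec i x).
Proof. by move=> [_ [Hf Ht]] [] . Qed.

Lemma ec_deg p (x : 'End(V)) i q v : (forall q v, v \in s q -> x v \in s (q + p)) ->
  v \in s q -> ec i x v \in s (q + p).
Proof. by move=> Hd Hv; rewrite ecompE; apply: rpredD; apply: s_pp; apply: Hd; apply: s_pp. Qed.

Lemma ec_kill (x : 'End(V)) i q : (forall v, v \in s q -> x v = 0) -> forall v, v \in s q -> ec i x v = 0.
Proof. by move=> Hk v Hv; rewrite ecompE (Hk _ (s_pp true Hv)) (Hk _ (s_pp false Hv)) !linear0 addr0. Qed.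

Lemma der_zero (x : 'End(V)) : (forall q v, v \in s q -> (- 1) <= q -> x v = 0) -> x = 0.
Proof.
move=> H; apply/lfunP => v; rewrite zero_lfunE; move: v; apply: all_ind.
- by rewrite linear0.
- by move=> a b Ha Hb; rewrite raddfD /= Ha Hb addr0.
move=> q u Hu; case: (ltrP q (- 1)) => Hq; last exact: H Hu Hq.
by move: Hu; rewrite (Hdep2 Hq) memv0 => /eqP ->; rewrite linear0.
Qed.

Lemma part_i p x : 0 <= p -> in_der_deg V0 V1 br D p x ->
  (forall y, y \in s (- 1) -> sbr V0 V1 x (ad br y) = 0) -> x = 0.
Proof.
move=> Hp [Hx Hd] Hs.
have K1 : forall y, y \in s (- 1) -> x y = 0.
  move=> y Hy; apply: center_l => v; rewrite -(@sbr_ad x y v Hx) (Hs _ Hy).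
  by rewrite zero_lfunE.
have Hind : forall n : nat, forall i v, v \in s (n%:Z - 1) -> ec i x v = 0.
  elim=> [|n IH] i v.
    by move=> Hv; rewrite sub0r in Hv; rewrite (ec_kill i K1 Hv).
  move=> Hv; apply: (Trans (k := n.+1%:Z - 1 + p)); first by move: Hp; lia.
    exact: ec_deg Hd Hv.
  move=> y; apply: (split_ind (Q := fun y => br y (ec i x v) = 0)).
  - by rewrite br0l.
  - by move=> a b Ha Hb; rewrite brDl Ha Hb addr0.
  move=> j {}y Hy Hyj.
  have := (der_sder Hx i).2 j y v Hyj.
  rewrite (ec_kill i K1 Hy) br0l add0r.
  have Hyv := s_br Hy Hv.
  rewrite (_ : - 1 + (n.+1%:Z - 1) = n%:Z - 1) in Hyv; last by lia.
  rewrite (IH i _ Hyv) => /esym /eqP; rewrite scaler_eq0 (negbTE (ssign_neq0 _ _)) /=.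
  by move/eqP.
apply: der_zero => q v Hv Hq.
rewrite -(ecomp_sum x) add_lfunE.
have [n En] : exists n : nat, q = n%:Z - 1.
  by exists (absz (q + 1)); move: Hq; lia.
by rewrite En in Hv; rewrite (Hind n false v Hv) (Hind n true v Hv) addr0.
Qed.


Lemma ad_der y : y \in s (- 1) -> in_der_deg V0 V1 br D (- 1) (ad br y).
Proof.
move=> Hy; split.
  split; first by rewrite ecomp_sum.
  by rewrite !ecomp_ad; split; apply: sder_ad; apply: Pmem.
by move=> q v Hv; rewrite adE addrC; apply: s_br.
Qed.

Lemma ad_neq0 y : y != 0 -> ad br y != 0.
Proof.
move=> Hy; apply/negP => /eqP H; move/negP: Hy; apply; apply/eqP.
by apply: center_l => v; rewrite -adE H zero_lfunE.
Qed.

Lemma exists_m1 : exists2 y, y \in s (- 1) & y != 0.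
Proof.
have : ~~ (s (- 1) <= 0)%VS by rewrite subv0.
by case/subvPn => y Hy; rewrite memv0 => Hy0; exists y.
Qed.

Lemma inner_zero p f : inner_grading V0 br D -> p < - 1 -> in_der_deg V0 V1 br D p f -> f = 0.
Proof.
move=> [h [Hh HDh]] Hp [Hf Hd].
have Hder : forall v, f (br h v) = br (f h) v + br h (f v).
  move=> v; have E := ecomp_sum f.
  rewrite -E !add_lfunE ((der_sder Hf false).2 false h v Hh) ((der_sder Hf true).2 false h v Hh).
  rewrite !ssignF2 !scale1r brDl brDr.
  by move: (br _ v) (br _ v) (br h _) (br h _) => a b c d; rewrite addrACA.
have Hhh : br h h = 0.
  have := @hsym false false h h Hh Hh; rewrite ssignF scale1r => /eqP.
  rewrite -subr_eq0 opprK -mulr2n -scaler_nat scaler_eq0 pnatr_eq0 /=.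
  by move/eqP.
have Hh0 : h \in s 0 by rewrite sP HDh Hhh scale0r.
have Hfh : f h = 0.
  by have := Hd 0 h Hh0; rewrite add0r (Hdep2 Hp) memv0 => /eqP.
apply/lfunP => v; rewrite zero_lfunE; move: v; apply: all_ind.
- by rewrite linear0.
- by move=> a b Ha Hb; rewrite raddfD /= Ha Hb addr0.
move=> q u Hu.
have := Hder u; rewrite Hfh br0l add0r -!HDh (sE Hu) (sE (Hd _ _ Hu)) linearZ /=.
move/eqP; rewrite -subr_eq0 -scalerBl rmorphD /= opprD addrA subrr sub0r scaleNr oppr_eq0.
rewrite scaler_eq0 intr_eq0 => /orP [/eqP Hp0|/eqP //].
by move: Hp; rewrite Hp0.
Qed.

Lemma abs_le_sum q l : q \in l -> (absz q <= \sum_(x <- l) absz x)%N.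
Proof.
elim: l => [|a l IH] //; rewrite in_cons big_cons => /orP [/eqP ->|Hq].
  exact: leq_addr.
exact: leq_trans (IH Hq) (leq_addl _ _).
Qed.

Lemma der_bound n f : ((\sum_(x <- r) absz x).+2 <= n)%N ->
  in_der_deg V0 V1 br D (- n%:Z) f -> f = 0.
Proof.
move=> Hn [Hf Hd]; apply/lfunP => v; rewrite zero_lfunE; move: v; apply: all_ind.
- by rewrite linear0.
- by move=> a b Ha Hb; rewrite raddfD /= Ha Hb addr0.
move=> q u Hu; case: (boolP (q \in r)) => Hq; last first.
  by move: Hu; rewrite (s_out Hq) memv0 => /eqP ->; rewrite linear0.
apply/eqP; rewrite -memv0 -(@Hdep2 (q - n%:Z)); first exact: Hd.
have H1 : q <= (absz q)%:Z by rewrite abszE ler_norm.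
have := abs_le_sum Hq; move: Hn H1; move: (\sum_(x <- r) `|x|)%N => S; lia.
Qed.

Lemma max_exists (Pn : nat -> Prop) B : Pn 1%N -> (forall n, (B <= n)%N -> ~ Pn n) ->
  exists d, [/\ Pn d, (1 <= d)%N & forall n, (d < n)%N -> ~ Pn n].
Proof.
move=> P1 HB.
suff H : forall k, (forall n, (k < n)%N -> ~ Pn n) -> (1 <= k)%N ->
    exists d, [/\ Pn d, (1 <= d)%N & forall n, (d < n)%N -> ~ Pn n].
  apply: (H (maxn B 1)); last by rewrite leq_max leqnn orbT.
  move=> n Hn; apply: HB; apply: leq_trans (ltnW Hn); exact: leq_maxl.
elim=> [|k IH] Hk // _.
case: (classic (Pn k.+1)) => Pk; first by exists k.+1.
case: k IH Hk Pk => [|k] IH Hk Pk; first by exfalso.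
apply: IH => // n Hn.
have [Hgt|Hle] := ltnP k.+2 n; first exact: Hk.
have -> : n = k.+2 by apply/eqP; rewrite eqn_leq Hle Hn.
exact: Pk.
Qed.


Lemma part_iv : exists d : int, der_has_depth V0 V1 br D d /\ 1 <= d /\
         (inner_grading V0 br D -> d = 1).
Proof.
pose Pn (n : nat) := exists f, in_der_deg V0 V1 br D (- n%:Z) f /\ f != 0.
have P1 : Pn 1%N.
  have [y Hy Hy0] := exists_m1.
  by exists (ad br y); split; [apply: ad_der | apply: ad_neq0].
have PB : forall n, ((\sum_(x <- r) absz x).+2 <= n)%N -> ~ Pn n.
  by move=> n Hn [f [Hf Hf0]]; move/negP: Hf0; apply; apply/eqP; apply: der_bound Hn Hf.
have [dn [Pd Hd1 Hmax]] := max_exists P1 PB.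
exists (Posz dn); split; last split.
- split; first exact: Pd.
  move=> p Hp f Hf; case: (boolP (f == 0)) => [/eqP //|Hf0]; exfalso.
  case: p Hp Hf => [m|m] Hp Hf; first by move: Hp; lia.
  apply: (Hmax m.+1); first by move: Hp; lia.
  by exists f; split => //; rewrite NegzE in Hf.
- by move: Hd1; lia.
- move=> Hin; case: (leqP dn 1) => Hdn; first by congr Posz; apply/eqP; rewrite eqn_leq Hdn Hd1.
  exfalso; case: Pd => f [Hf Hf0]; move/negP: Hf0; apply; apply/eqP.
  by apply: (inner_zero Hin _ Hf); move: Hdn; lia.
Qed.

Lemma main_sec :
  [/\ (forall (p : int) (x : 'End(V)), 0 <= p -> in_der_deg V0 V1 br D p x ->
         (forall y, y \in gcomp D (-1) -> sbr V0 V1 x (ad br y) = 0) -> x = 0),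
      gcomp D 0 != 0%VS /\ gcomp D 1 != 0%VS,
      irreducible_G br (gcomp D 0) (gcomp D (-1)),
      (exists d : int, der_has_depth V0 V1 br D d /\ 1 <= d /\
         (inner_grading V0 br D -> d = 1)) &
      (forall x, x \in gcomp D (-1) ->
         (forall y, y \in gcomp D 0 -> br y x = 0) -> x = 0)].
Proof.
split.
- exact: part_i.
- by split; [exact: s0_neq0 | exact: s1_neq0].
- exact: irrG.
- exact: part_iv.
- exact: partv.
Qed.

End Basics.


Unset Implicit Arguments.

Theorem lemma3p10 (R : realType) (V : vectType R[i])
    (V0 V1 : {vspace V}) (br : V -> V -> V) (D : 'End(V)) :
  is_lie_superalgebra V0 V1 br ->
  is_simple V0 V1 br ->
  is_grading_operator V0 V1 br D ->
  has_depth D 1 ->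
  [/\ (* (i) *)
      (forall (p : int) (x : 'End(V)), 0 <= p -> in_der_deg V0 V1 br D p x ->
         (forall y, y \in gcomp D (-1) -> sbr V0 V1 x (ad br y) = 0) -> x = 0),
      (* (ii) *)
      gcomp D 0 != 0%VS /\ gcomp D 1 != 0%VS,
      (* (iii) *)
      irreducible_G br (gcomp D 0) (gcomp D (-1)),
      (* (iv) *)
      (exists d : int, der_has_depth V0 V1 br D d /\ 1 <= d /\
         (inner_grading V0 br D -> d = 1)) &
      (* (v) *)
      (forall x, x \in gcomp D (-1) ->
         (forall y, y \in gcomp D 0 -> br y x = 0) -> x = 0)].
Proof.
move=> [Hdir Hfull Hl1 [Hl2 Hpar Hsym Hjac]] [Hna Hs] [HDs [r Hr]] [Hd1 Hd2].
apply: (main_sec Hdir Hfull Hl1 Hl2 Hpar Hsym Hjac Hna Hs HDs Hr Hd1 Hd2).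
Qed.
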